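(* Let $\mathcal F$ be an infinite family of closed convex sets in $\mathbb R^d$ satisfying the $(d+1,d+1)$-property and such that $\bigcap_{A\in\mathcal F}A=\emptyset$. Then there is a unit vector $v\in\mathbb R^d$ such that for every $A\in\mathcal F$ and every $a\in A$ we have $\{a+tv : t\ge0\}\subseteq A$.
   Context: The $(d+1,d+1)$-property means that every $d+1$ members of the family have a common point. *)

(* Defs.v *)
From Stdlib Require Import Reals List.
From mathcomp Require Import all_boot.
Set Implicit Arguments.
Unset Strict Implicit.
Unset Printing Implicit Defensive.

Definition point (d : nat) := 'I_d -> R.

Definition vadd d (x y : point d) : point d := fun i => Rplus (x i) (y i).
Definition vscale d (t : R) (x : point d) : point d := fun i => Rmult t (x i).

Definition sqnorm d (x : point d) : R := \big[Rplus/R0]_(i : 'I_d) Rmult (x i) (x i).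
Definition dist d (x y : point d) : R := sqrt (sqnorm (fun i => Rminus (x i) (y i))).

Definition is_convex d (A : point d -> Prop) : Prop :=
  forall x y (t : R), A x -> A y -> Rle 0 t /\ Rle t 1 ->
    A (vadd (vscale t x) (vscale (Rminus 1 t) y)).

Definition is_closed d (A : point d -> Prop) : Prop :=
  forall x, (forall eps : R, Rlt 0 eps -> exists a, A a /\ Rlt (dist x a) eps) -> A x.

Definition setfamily d := (point d -> Prop) -> Prop.

Definition infinite_family d (F : setfamily d) : Prop :=
  forall l : list (point d -> Prop), exists A, F A /\ ~ In A l.

Definition kk_property d (k : nat) (F : setfamily d) : Prop :=
  forall l : list (point d -> Prop), List.length l = k -> NoDup l ->
    (forall A, In A l -> F A) -> exists x, forall A, In A l -> A x.

(* Main.v *)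
Require Import Defs.
From Stdlib Require Import Reals List Lra Lia.
From mathcomp Require Import all_boot all_algebra.
From mathcomp Require Import Rstruct.
From Stdlib Require Import ClassicalEpsilon FunctionalExtensionality Classical.
Set Implicit Arguments.
Unset Strict Implicit.
Unset Printing Implicit Defensive.
Open Scope R_scope.
Notation edist := Defs.dist.

Lemma cv_ext (u v : nat -> R) l : (forall n, u n = v n) -> Un_cv u l -> Un_cv v l.
Proof. move=> H Hu eps He; have [N HN] := Hu eps He; exists N => n Hn; rewrite -H; exact: HN. Qed.

Lemma cv_const c : Un_cv (fun _ => c) c.
Proof. move=> eps He; exists 0%nat => n _; rewrite /R_dist Rminus_diag Rabs_R0; lra. Qed.

Lemma cv_squeeze (u w : nat -> R) l : (forall n, Rabs (u n - l) <= w n) -> Un_cv w 0 -> Un_cv u l.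
Proof.
move=> H Hw eps He; have [N HN] := Hw eps He; exists N => n Hn.
have := HN n Hn; rewrite /R_dist Rminus_0_r => h.
have := H n; have := Rle_abs (w n); lra.
Qed.

Lemma archi eps : 0 < eps -> exists N : nat, / (INR N + 1) < eps.
Proof.
move=> He; have [n Hn] := INR_archimed eps 1 He.
exists n; have h0 := pos_INR n.
apply: (Rmult_lt_reg_l (INR n + 1)); first lra.
rewrite Rinv_r; lra.
Qed.

Lemma cv_inv : Un_cv (fun n => / (INR n + 1)) 0.
Proof.
move=> eps He; have [N HN] := archi He; exists N => n Hn.
rewrite /R_dist Rminus_0_r Rabs_right; last first.
  by apply: Rle_ge; apply: Rlt_le; apply: Rinv_0_lt_compat; have := pos_INR n; lra.
apply: Rle_lt_trans HN; apply: Rinv_le_contravar; first by have := pos_INR N; lra.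
have := le_INR _ _ Hn; lra.
Qed.

Lemma cv_scal (u : nat -> R) l c : Un_cv u l -> Un_cv (fun n => c * u n) (c * l).
Proof. move=> H; exact: (CV_mult _ _ _ _ (cv_const c) H). Qed.

Lemma sum_ge0 (I : Type) (r : seq I) (P : pred I) (F : I -> R) :
  (forall i, 0 <= F i) -> 0 <= \big[Rplus/R0]_(i <- r | P i) F i.
Proof. move=> H; apply: (big_ind (fun s => 0 <= s)) => //; [lra| move=> a b; lra]. Qed.

Lemma sum_le_const (I : Type) (r : seq I) (F : I -> R) c :
  (forall i, F i <= c) -> \big[Rplus/R0]_(i <- r) F i <= INR (size r) * c.
Proof.
move=> H; elim: r => [|a r IH]; first by rewrite big_nil /=; lra.
rewrite big_cons; change (size (a :: r)) with (size r).+1; rewrite S_INR; have := H a; lra.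
Qed.

Lemma sqnorm_ge0 d (x : point d) : 0 <= sqnorm x.
Proof. apply: sum_ge0 => i; nra. Qed.

Lemma coord_le_sqnorm d (x : point d) i : x i * x i <= sqnorm x.
Proof.
rewrite /sqnorm (bigD1 i) //=.
rewrite -{1}(Rplus_0_r (x i * x i)); apply: Rplus_le_compat_l; apply: sum_ge0 => j; nra.
Qed.

Lemma coord_le_dist d (x y : point d) i : Rabs (x i - y i) <= edist x y.
Proof.
rewrite /Defs.dist -sqrt_Rsqr_abs; apply: sqrt_le_1_alt.
exact: (coord_le_sqnorm (fun i => x i - y i) i).
Qed.

Lemma dist_bound d (x y : point d) e : 0 <= e ->
  (forall i, Rabs (x i - y i) <= e) -> edist x y <= (INR d + 1) * e.
Proof.
move=> He H; rewrite /Defs.dist -(sqrt_Rsqr ((INR d + 1) * e)); last by have := pos_INR d; nra.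
apply: sqrt_le_1_alt; rewrite /sqnorm -big_enum.
have := @sum_le_const _ (enum 'I_d) (fun i => (x i - y i) * (x i - y i)) (e * e).
rewrite size_enum_ord => h.
apply: Rle_trans (h _) _.
  move=> i; have := H i; have := Rabs_pos (x i - y i) => ? ?.
  change ((x i - y i)*(x i - y i)) with (Rsqr (x i - y i)); rewrite Rsqr_abs /Rsqr; nra.
rewrite /Rsqr; have := pos_INR d; nra.
Qed.

Definition conv d (a : nat -> point d) (x : point d) :=
  forall i, Un_cv (fun n => a n i) (x i).
Definition seq_closed d (A : point d -> Prop) :=
  forall a x, (forall n, A (a n)) -> conv a x -> A x.

Lemma conv_unif d (a : nat -> point d) x eps : conv a x -> 0 < eps ->
  exists N, forall n i, (N <= n)%N -> Rabs (a n i - x i) < eps.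
Proof.
move=> Hc He.
have H : forall i, {N | forall n, (n >= N)%coq_nat -> R_dist (a n i) (x i) < eps}.
  by move=> i; apply: constructive_indefinite_description; exact: Hc.
exists (\max_(i : 'I_d) proj1_sig (H i))%N => n i Hn.
have Hi : (proj1_sig (H i) <= \max_(j : 'I_d) proj1_sig (H j))%N by apply: leq_bigmax.
apply: (proj2_sig (H i)); apply/leP; exact: leq_trans Hi Hn.
Qed.

Lemma closed_seq d (A : point d -> Prop) : is_closed A -> seq_closed A.
Proof.
move=> HA a x Han Hc; apply: HA => eps He.
have hd := pos_INR d.
have He' : 0 < eps / (2 * (INR d + 1)).
  apply: Rdiv_lt_0_compat => //; lra.
have [N HN] := conv_unif Hc He'.
exists (a N); split => //.
apply: Rle_lt_trans (dist_bound (y := a N) (Rlt_le _ _ He') _) _.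
  by move=> i; rewrite Rabs_minus_sym; apply: Rlt_le; apply: HN.
apply: (Rmult_lt_reg_r (2 * (INR d + 1))); first lra.
field_simplify; try lra; nra.
Qed.

Lemma seq_closed_closed d (A : point d -> Prop) : seq_closed A -> is_closed A.
Proof.
move=> HA x Hx.
have H : forall n : nat, {a | A a /\ edist x a < / (INR n + 1)}.
  move=> n; apply: constructive_indefinite_description; apply: Hx.
  by apply: Rinv_0_lt_compat; have := pos_INR n; lra.
apply: (HA (fun n => proj1_sig (H n))); first by move=> n; case: (proj2_sig (H n)).
move=> i; apply: (cv_squeeze (w := fun n => / (INR n + 1))); last exact: cv_inv.
move=> n; case: (proj2_sig (H n)) => _ h; apply: Rlt_le; apply: Rle_lt_trans h.
rewrite Rabs_minus_sym; exact: coord_le_dist.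
Qed.

Lemma cv_half : Un_cv (fun n => (/2) ^ n) 0.
Proof.
move=> eps He.
have h : Rabs (/2) < 1 by rewrite Rabs_right; lra.
have [N HN] := pow_lt_1_zero (/2) h eps He; exists N => n Hn.
rewrite /R_dist Rminus_0_r; exact: HN.
Qed.

Definition inbox d (lo : point d) (w : R) (x : point d) :=
  forall k, lo k <= x k <= lo k + w.

Lemma cube_compact d (I : Type) (f : I -> point d -> Prop) (M : R) :
  0 <= M -> (forall i, seq_closed (f i)) ->
  (forall l : list I, exists x, (forall k, -M <= x k <= M) /\ forall i, In i l -> f i x) ->
  exists x, forall i, f i x.
Proof.
move=> HM Hcl HF.
pose good lo w := forall l : list I, exists x, inbox lo w x /\ forall i, In i l -> f i x.
have step : forall lo w, 0 <= w -> good lo w ->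
    exists lo', good lo' (w/2) /\ forall k, lo k <= lo' k <= lo k + w/2.
  move=> lo w Hw Hg; apply: NNPP => Hno.
  pose sub (s : {ffun 'I_d -> bool}) := fun k => lo k + (if s k then w/2 else 0).
  have Hbad : forall s : {ffun 'I_d -> bool}, exists l,
      forall x, inbox (sub s) (w/2) x -> ~ (forall i, In i l -> f i x).
    move=> s; apply: NNPP => Hn; apply: Hno; exists (sub s); split; last first.
      by move=> k; rewrite /sub; case: (s k); lra.
    move=> l; apply: NNPP => Hl; apply: Hn; exists l => x Hx Hall; apply: Hl.
    by exists x.
  have L : forall s, {l | forall x, inbox (sub s) (w/2) x -> ~ (forall i, In i l -> f i x)}.
    by move=> s; apply: constructive_indefinite_description.
  have [x [Hx Hall]] := Hg (flat_map (fun s => proj1_sig (L s)) (enum {ffun 'I_d -> bool})).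
  pose s0 := [ffun k => if Rle_dec (lo k + w/2) (x k) then true else false].
  apply: (proj2_sig (L s0) x).
    move=> k; rewrite /sub ffunE; have := Hx k.
    case: Rle_dec => /= h; lra.
  move=> i Hi; apply: Hall; apply/in_flat_map; exists s0; split => //.
  have : s0 \in enum {ffun 'I_d -> bool} by rewrite mem_enum.
  elim: (enum _) => [|a r IH] //; rewrite in_cons => /orP [/eqP -> | /IH]; [left | right] => //.
pose W n := 2 * M * (/2) ^ n.
have W0 : forall n, 0 <= W n.
  move=> n; rewrite /W; have := pow_le (/2) n ltac:(lra); nra.
have WS : forall n, W n.+1 = W n / 2.
  by move=> n; rewrite /W /=; field.
have G : forall p : point d * R, {lo' | 0 <= p.2 -> good p.1 p.2 ->
    good lo' (p.2/2) /\ forall k, p.1 k <= lo' k <= p.1 k + p.2/2}.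
  move=> [lo w]; apply: constructive_indefinite_description.
  case: (classic (0 <= w /\ good lo w)) => [[Hw Hg]|Hn].
    by have [lo' H] := step lo w Hw Hg; exists lo'.
  by exists lo => Hw Hg; exfalso; apply: Hn.
pose lo := fix lo n := match n with 0%N => (fun _ => - M) | m.+1 => proj1_sig (G (lo m, W m)) end.
have Hgood : forall n, good (lo n) (W n).
  elim=> [|n IH].
    move=> l; have [x [Hx H]] := HF l; exists x; split => // k.
    rewrite /W /= Rmult_1_r; have := Hx k; lra.
  have [H _] := proj2_sig (G (lo n, W n)) (W0 n) IH; by rewrite WS.
have Hnest : forall n k, lo n k <= lo n.+1 k <= lo n k + W n.+1.
  move=> n k; have [_ H] := proj2_sig (G (lo n, W n)) (W0 n) (Hgood n).
  rewrite WS; exact: H k.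
have Hgen : forall k n j, lo n k <= lo (n + j)%N k <= lo n k + W n - W (n + j)%N.
  move=> k n; elim=> [|j IH]; first by rewrite addn0; lra.
  rewrite addnS; have := Hnest (n + j)%N k; have := WS (n + j)%N; lra.
have Hcv : forall k, {l | Un_cv (fun n => lo n k) l}.
  move=> k; apply: growing_cv.
    by move=> n; have := Hnest n k; lra.
  exists (lo 0%N k + W 0%N) => _ [n ->].
  have := Hgen k 0%N n; have := W0 n; rewrite add0n; lra.
pose x := fun k => proj1_sig (Hcv k).
have Hxb : forall n k, lo n k <= x k <= lo n k + W n.
  move=> n k; split.
    apply: growing_ineq (proj2_sig (Hcv k)) n.
    by move=> m; have := Hnest m k; lra.
  apply: (Rle_cv_lim (Vn := fun _ => lo n k + W n)) (proj2_sig (Hcv k)) (cv_const _).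
  move=> m; case: (leqP n m) => Hnm.
    rewrite -(subnKC Hnm); have := Hgen k n (m - n)%N; have := W0 (n + (m - n))%N; lra.
  have Hmn : (m <= n)%N by apply: ltnW.
  rewrite -(subnKC Hmn); have := Hgen k m (n - m)%N; rewrite (subnKC Hmn); have := W0 n; lra.
exists x => i.
have Y : forall n, {y | inbox (lo n) (W n) y /\ f i y}.
  move=> n; apply: constructive_indefinite_description.
  have [y [Hy Hy']] := Hgood n [:: i]; exists y; split => //; apply: Hy'; by left.
apply: (Hcl i (fun n => proj1_sig (Y n))); first by move=> n; case: (proj2_sig (Y n)).
move=> k; apply: (cv_squeeze (w := W)).
  move=> n; case: (proj2_sig (Y n)) => /(_ k) h _; have := Hxb n k.
  case: (Rcase_abs (sval (Y n) k - x k)) => h'; [rewrite Rabs_left | rewrite Rabs_right]; lra.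
have := cv_scal (2 * M) cv_half; rewrite Rmult_0_r; apply: cv_ext => n; done.
Qed.

Lemma ext_pt d (A : point d -> Prop) (x y : point d) :
  (forall i, x i = y i) -> A x -> A y.
Proof. by move=> H; have -> : x = y by apply: functional_extensionality. Qed.

Lemma seg d (A : point d -> Prop) x y t : is_convex A -> A x -> A y -> 0 <= t <= 1 ->
  A (fun i => t * x i + (1 - t) * y i).
Proof. by move=> HA Hx Hy Ht; apply: (HA x y t). Qed.

Lemma ccomb d (A : point d -> Prop) (I : Type) (r : seq I) (mu : I -> R) (y : I -> point d) :
  is_convex A -> (forall k, 0 <= mu k) -> (forall k, 0 < mu k -> A (y k)) ->
  (\big[Rplus/R0]_(k <- r) mu k = 0 /\ forall i, \big[Rplus/R0]_(k <- r) (mu k * y k i) = 0)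
  \/ (0 < \big[Rplus/R0]_(k <- r) mu k /\
      A (fun i => \big[Rplus/R0]_(k <- r) (mu k * y k i) / \big[Rplus/R0]_(k <- r) mu k)).
Proof.
move=> HA Hmu Hy; elim: r => [|a r IH].
  by left; rewrite big_nil; split => // i; rewrite big_nil.
have [Ha|Ha] := Rle_lt_or_eq_dec _ _ (Hmu a); case: IH => [[HS HT]|[HS HZ]].
- right; rewrite big_cons HS Rplus_0_r; split => //.
  apply: ext_pt (Hy a Ha) => i; rewrite big_cons HT; field; lra.
- right; rewrite big_cons; split; first lra.
  pose t := mu a / (mu a + \big[Rplus/R0]_(k <- r) mu k).
  have Ht : 0 <= t <= 1.
    rewrite /t; split; first by apply: Rlt_le; apply: Rdiv_lt_0_compat; lra.
    apply: (Rmult_le_reg_r (mu a + \big[Rplus/R0]_(k <- r) mu k)); first lra.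
    rewrite /Rdiv Rmult_assoc Rinv_l; lra.
  apply: ext_pt (seg HA (Hy a Ha) HZ Ht) => i; rewrite big_cons /t; field; lra.
- left; rewrite big_cons -Ha HS; split; first lra.
  by move=> i; rewrite big_cons -Ha HT; lra.
- right; rewrite big_cons -Ha Rplus_0_l; split => //.
  by apply: ext_pt HZ => i; rewrite big_cons -Ha Rmult_0_l Rplus_0_l.
Qed.

Lemma sum_scal (I : Type) (r : seq I) (F : I -> R) c :
  \big[Rplus/R0]_(k <- r) (c * F k) = c * \big[Rplus/R0]_(k <- r) F k.
Proof. elim: r => [|a r IH]; rewrite ?big_nil ?big_cons ?IH; ring. Qed.

Lemma sum_plus (I : Type) (r : seq I) (F G : I -> R) :
  \big[Rplus/R0]_(k <- r) (F k + G k) = \big[Rplus/R0]_(k <- r) F k + \big[Rplus/R0]_(k <- r) G k.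
Proof. elim: r => [|a r IH]; rewrite ?big_nil ?big_cons ?IH; ring. Qed.

Lemma sum_ext (I : Type) (r : seq I) (F G : I -> R) :
  (forall k, F k = G k) -> \big[Rplus/R0]_(k <- r) F k = \big[Rplus/R0]_(k <- r) G k.
Proof. by move=> H; elim: r => [|a r IH]; rewrite ?big_nil ?big_cons ?IH ?H. Qed.

Section RadonSec.
Local Open Scope ring_scope.
Lemma radon_dep0 d n (x : 'I_n -> point d) : (d.+1 < n)%N ->
  exists lam : 'I_n -> R, (exists k, lam k <> R0) /\
    \big[Rplus/R0]_k lam k = R0 /\
    forall i, \big[Rplus/R0]_k (Rmult (lam k) (x k i)) = R0.
Proof.
move=> Hn.
pose Mx : 'M[R]_(n, d.+1) := \matrix_(k, j) match unlift ord_max j with Some j' => x k j' | None => 1 end.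
have HK : kermx Mx != 0.
  rewrite kermx_eq0 /row_free; apply/negP => /eqP h.
  have := rank_leq_col Mx; rewrite h => h'.
  by have := leq_ltn_trans h' Hn; rewrite ltnn.
have [i0 Hi0] : exists i0, row i0 (kermx Mx) != 0.
  apply: NNPP => H; move/negP: HK; apply; apply/eqP/row_matrixP => i.
  rewrite row0; apply/eqP; apply: NNPP => h; apply: H; exists i; exact/negP.
pose u := row i0 (kermx Mx).
have Hu : u *m Mx = 0 by rewrite /u -row_mul mulmx_ker row0.
have Heq : forall j, \sum_k u 0 k * Mx k j = 0.
  move=> j; move/matrixP: Hu => /(_ 0 j); by rewrite !mxE.
exists (fun k => u 0 k); split; last split.
- apply: NNPP => H; move/negP: Hi0; apply; apply/eqP/rowP => k.
  rewrite [RHS]mxE; apply: NNPP => h; apply: H; exists k; exact: h.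
- have := Heq ord_max; rewrite (eq_bigr (fun k => u 0 k)) //.
  by move=> k _; rewrite [Mx k _]mxE unlift_none GRing.mulr1.
- move=> i; have := Heq (lift ord_max i); rewrite (eq_bigr (fun k => u 0 k * x k i)) //.
  by move=> k _; rewrite [Mx k _]mxE liftK.
Qed.
End RadonSec.

Lemma radon_pos d n (x : 'I_n -> point d) : (d.+1 < n)%N ->
  exists lam : 'I_n -> R, (exists k, 0 < lam k) /\
    \big[Rplus/R0]_k lam k = 0 /\
    forall i, \big[Rplus/R0]_k (lam k * x k i) = 0.
Proof.
move=> Hn; have [lam0 [[k0 Hk0] [H1 H2]]] := radon_dep0 x Hn.
case: (classic (exists k, 0 < lam0 k)) => Hpos; first by exists lam0.
exists (fun k => -1 * lam0 k); split; last split.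
- exists k0; have : ~ 0 < lam0 k0 by move=> h; apply: Hpos; exists k0.
  move: Hk0; lra.
- by rewrite sum_scal H1; ring.
- move=> i; rewrite (sum_ext _ (G := fun k => -1 * (lam0 k * x k i))); last by move=> k; ring.
  by rewrite sum_scal H2; ring.
Qed.

Lemma sum_ge_term (I : finType) (F : I -> R) k : (forall i, 0 <= F i) ->
  F k <= \big[Rplus/R0]_i F i.
Proof.
move=> H; rewrite (bigD1 k) //=.
rewrite -{1}(Rplus_0_r (F k)); apply: Rplus_le_compat_l; exact: sum_ge0.
Qed.

Lemma In_mem (T : eqType) (x : T) (s : seq T) : x \in s -> In x s.
Proof. by elim: s => [|a r IH] //; rewrite in_cons => /orP [/eqP -> | /IH]; [left | right]. Qed.

Lemma length_size (T : Type) (s : seq T) : List.length s = size s.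
Proof. by elim: s => [|a r IH] //=; rewrite IH. Qed.

Lemma helly_base d (F : setfamily d) : infinite_family F -> kk_property d.+1 F ->
  forall l, (List.length l <= d.+1)%coq_nat -> exists x, forall A, In A l -> F A -> A x.
Proof.
move=> Hinf Hkk l Hl.
pose l1 := List.filter (fun A => if excluded_middle_informative (F A) then true else false) l.
have dec : forall A B : point d -> Prop, {A = B} + {A <> B}.
  by move=> A B; apply: excluded_middle_informative.
pose l2 := nodup dec l1.
have Hl2 : forall A, In A l2 <-> In A l /\ F A.
  move=> A; rewrite /l2 nodup_In /l1 filter_In.
  by case: excluded_middle_informative => h; split; case.
have ND := NoDup_nodup dec l1.
have Hlen : (List.length l2 <= d.+1)%coq_nat.
  apply: Nat.le_trans Hl; apply: NoDup_incl_length => // A /Hl2 []; done.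
have ext : forall k l', NoDup l' -> (forall A, In A l' -> F A) -> (List.length l' + k)%coq_nat = d.+1 ->
    exists l'', NoDup l'' /\ (forall A, In A l'' -> F A) /\ List.length l'' = d.+1 /\ incl l' l''.
  elim=> [|k IH] l' H1 H2 H3.
    exists l'; split; first done; split; first done; split; [lia | apply: incl_refl].
  have [A [HA HAn]] := Hinf l'.
  have [l'' [? [? [? Hi]]]] := IH (A :: l') (NoDup_cons _ HAn H1)
      ltac:(by move=> B [<-|/H2]) ltac:(rewrite /=; lia).
  exists l''; split; first done; split; first done; split; first done.
  by move=> B HB; apply: Hi; right.
have [l'' [H1 [H2 [H3 Hi]]]] := ext (d.+1 - List.length l2)%coq_nat l2 ND
   ltac:(by move=> A /Hl2 []) ltac:(lia).
have [x Hx] := Hkk l'' H3 H1 H2.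
exists x => A HA HF; apply: Hx; apply: Hi; exact/Hl2.
Qed.

Lemma Rmax_split a : a = Rmax a 0 - Rmax (- a) 0.
Proof. rewrite /Rmax; do 2 case: Rle_dec; lra. Qed.

Lemma helly d (F : setfamily d) : infinite_family F -> kk_property d.+1 F ->
  (forall A, F A -> is_convex A) ->
  forall n (B : 'I_n -> point d -> Prop), exists x, forall k, F (B k) -> B k x.
Proof.
move=> Hinf Hkk Hcv; elim=> [|m IH] B.
  exists (fun _ => 0) => - [m0 Hm0]; exfalso; by rewrite ltn0 in Hm0.
case: (leqP m.+1 d.+1) => Hm.
  have Hl : (List.length (List.map B (enum 'I_m.+1)) <= d.+1)%coq_nat.
    by rewrite length_map length_size size_enum_ord; apply/leP.
  have [x Hx] := helly_base Hinf Hkk Hl.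
  exists x => k HF; apply: Hx HF; apply: in_map; apply: In_mem; by rewrite mem_enum.
have X : forall k : 'I_m.+1, {x | forall j, F (B (lift k j)) -> B (lift k j) x}.
  by move=> k; apply: constructive_indefinite_description; apply: IH.
pose Xp k := proj1_sig (X k).
have HX : forall k j, j != k -> F (B j) -> B j (Xp k).
  move=> k j; case: (unliftP k j) => [j' -> _|-> ]; last by rewrite eqxx.
  exact: (proj2_sig (X k)).
have [lam [[k0 Hk0] [H1 H2]]] := radon_pos Xp Hm.
pose mp k := Rmax (lam k) 0.
pose mn k := Rmax (- lam k) 0.
have mp0 : forall k, 0 <= mp k by move=> k; apply: Rmax_r.
have mn0 : forall k, 0 <= mn k by move=> k; apply: Rmax_r.
have Hmpl : forall k, 0 < mp k -> 0 < lam k.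
  by move=> k; rewrite /mp /Rmax; case: Rle_dec; lra.
have Hmnl : forall k, 0 < mn k -> lam k < 0.
  by move=> k; rewrite /mn /Rmax; case: Rle_dec; lra.
have Es : \big[Rplus/R0]_k mp k = \big[Rplus/R0]_k mn k.
  have : \big[Rplus/R0]_k (mp k + -1 * mn k) = 0.
    by rewrite -H1; apply: sum_ext => k; rewrite {1}(Rmax_split (lam k)) /mp /mn; ring.
  rewrite sum_plus sum_scal; lra.
have Ex : forall i, \big[Rplus/R0]_k (mp k * Xp k i) = \big[Rplus/R0]_k (mn k * Xp k i).
  move=> i.
  have : \big[Rplus/R0]_k (mp k * Xp k i + -1 * (mn k * Xp k i)) = 0.
    by rewrite -(H2 i); apply: sum_ext => k; rewrite {1}(Rmax_split (lam k)) /mp /mn; ring.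
  rewrite sum_plus sum_scal; lra.
have Hs : 0 < \big[Rplus/R0]_k mp k.
  apply: Rlt_le_trans (sum_ge_term k0 mp0); rewrite /mp /Rmax; case: Rle_dec; lra.
exists (fun i => \big[Rplus/R0]_k (mp k * Xp k i) / \big[Rplus/R0]_k mp k) => j HF.
have [Hj|Hj] := Rle_or_lt (lam j) 0.
- have Hy : forall k, 0 < mp k -> B j (Xp k).
    move=> k /Hmpl hk; apply: HX HF; apply/eqP => e; rewrite -e in hk; lra.
  case: (ccomb (index_enum 'I_m.+1) (Hcv _ HF) mp0 Hy) => [[h _]|[_ h]]; last exact h.
  have h' : \big[Rplus/R0]_k mp k = 0 := h; lra.
- have Hy : forall k, 0 < mn k -> B j (Xp k).
    move=> k /Hmnl hk; apply: HX HF; apply/eqP => e; rewrite -e in hk; lra.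
  case: (ccomb (index_enum 'I_m.+1) (Hcv _ HF) mn0 Hy) => [[h _]|[_ h]].
    have h' : \big[Rplus/R0]_k mn k = 0 := h; lra.
  apply: ext_pt h => i; by rewrite Ex Es.
Qed.

Lemma cv_sum (I : Type) (r : seq I) (f : nat -> I -> R) (g : I -> R) :
  (forall k, Un_cv (fun n => f n k) (g k)) ->
  Un_cv (fun n => \big[Rplus/R0]_(k <- r) f n k) (\big[Rplus/R0]_(k <- r) g k).
Proof.
move=> H; elim: r => [|a r IH].
  rewrite big_nil; apply: cv_ext (cv_const R0) => n; by rewrite big_nil.
rewrite big_cons; apply: cv_ext (CV_plus _ _ _ _ (H a) IH) => n; by rewrite big_cons.
Qed.

Lemma sphere_closed d : seq_closed (fun u : point d => sqnorm u = 1).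
Proof.
move=> a x Ha Hc; rewrite /sqnorm.
have := cv_sum (index_enum 'I_d) (f := fun n k => a n k * a n k) (g := fun k => x k * x k)
  (fun k => CV_mult _ _ _ _ (Hc k) (Hc k)).
move=> h; apply: (UL_sequence _ _ _ h); apply: cv_ext (cv_const 1) => n.
by rewrite -(Ha n).
Qed.

Lemma ray d (A : point d -> Prop) (p v a : point d) t :
  seq_closed A -> is_convex A -> (forall n : nat, A (fun i => p i + INR n * v i)) ->
  A a -> 0 <= t -> A (fun i => a i + t * v i).
Proof.
move=> Hcl Hcv Hp Ha Ht.
have [N HN] := INR_archimed 1 t Rlt_0_1.
pose m n := INR (n + N).+1.
have Hm : forall n, INR n + 1 <= m n /\ t <= m n.
  move=> n; rewrite /m S_INR plus_INR; have := pos_INR n; have := pos_INR N; lra.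
pose lam n := t / m n.
have Hl : forall n, 0 <= lam n <= 1.
  move=> n; have [h1 h2] := Hm n; have h0 := pos_INR n; rewrite /lam; split.
    apply: Rmult_le_pos => //; apply: Rlt_le; apply: Rinv_0_lt_compat; lra.
  apply: (Rmult_le_reg_r (m n)); first lra.
  rewrite /Rdiv Rmult_assoc Rinv_l; lra.
pose b n := fun i => lam n * (p i + m n * v i) + (1 - lam n) * a i.
apply: (Hcl b).
  move=> n; apply: (seg Hcv _ Ha (Hl n)).
  by have := Hp (n + N).+1.
move=> i; apply: (cv_squeeze (w := fun n => (t * Rabs (p i - a i)) * / (INR n + 1))).
  move=> n; have [h1 h2] := Hm n; have h0 := pos_INR n.
  have -> : b n i - (a i + t * v i) = lam n * (p i - a i).
    rewrite /b /lam; field; lra.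
  rewrite Rabs_mult Rabs_right; last by have := Hl n; lra.
  have hi : / m n <= / (INR n + 1) by apply: Rinv_le_contravar; lra.
  have hq := Rabs_pos (p i - a i).
  have := Rmult_le_compat_l (t * Rabs (p i - a i)) _ _ (Rmult_le_pos _ _ Ht hq) hi.
  rewrite /lam /Rdiv; nra.
have := cv_scal (t * Rabs (p i - a i)) cv_inv; rewrite Rmult_0_r; done.
Qed.

Definition Cl d (F : setfamily d) (l : list (point d -> Prop)) (x : point d) :=
  forall A, In A l -> F A -> A x.

Lemma Cl_closed d (F : setfamily d) l : (forall A, F A -> is_closed A) -> seq_closed (Cl F l).
Proof.
move=> H a x Ha Hc A HA HF; apply: (closed_seq (H A HF) _ Hc) => n; exact: Ha.
Qed.

Lemma Cl_convex d (F : setfamily d) l : (forall A, F A -> is_convex A) -> is_convex (Cl F l).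
Proof. move=> H x y t Hx Hy Ht A HA HF; apply: (H A HF) => //; [exact: Hx|exact: Hy]. Qed.

Lemma Cl_app d (F : setfamily d) l1 l2 x : Cl F (l1 ++ l2) x -> Cl F l1 x /\ Cl F l2 x.
Proof. by move=> H; split=> A HA; apply: H; apply: in_or_app; [left|right]. Qed.

Lemma helly_list d (F : setfamily d) : infinite_family F -> kk_property d.+1 F ->
  (forall A, F A -> is_convex A) -> forall l, exists x, Cl F l x.
Proof.
move=> Hinf Hkk Hcv l.
have [x Hx] := helly Hinf Hkk Hcv (fun k : 'I_(List.length l) => List.nth k l (fun _ => True)).
exists x => A HA HF.
have [n [Hn En]] := In_nth l A (fun _ => True) HA.
have Hn' : (n < List.length l)%N by apply/ltP.
by have := Hx (Ordinal Hn'); rewrite /= En; apply.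
Qed.

Lemma unbounded d (F : setfamily d) : infinite_family F -> kk_property d.+1 F ->
  (forall A, F A -> is_closed A /\ is_convex A) ->
  ~ (exists x : point d, forall A, F A -> A x) ->
  forall l M, exists x, Cl F l x /\ exists k, M < Rabs (x k).
Proof.
move=> Hinf Hkk Hcc Hne l M; apply: NNPP => Hn.
have Hb : forall x, Cl F l x -> forall k, Rabs (x k) <= M.
  move=> x Hx k; apply: Rnot_lt_le => h; apply: Hn; exists x; split => //; by exists k.
apply: Hne.
have Hcl : forall A, seq_closed (fun x => Cl F l x /\ (F A -> A x)).
  move=> A a y Ha Hc; split.
    by apply: (Cl_closed (l := l) (fun B HB => proj1 (Hcc B HB)) (a := a)) => // n; case: (Ha n).
  move=> HF; apply: (closed_seq (proj1 (Hcc A HF)) (a := a)) => // n; case: (Ha n) => _ h; exact: h HF.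
have Hfip : forall l' : list (point d -> Prop), exists x, (forall k, - Rabs M <= x k <= Rabs M) /\
    forall A, In A l' -> Cl F l x /\ (F A -> A x).
  move=> l'; have [x Hx] := helly_list Hinf Hkk (fun B HB => proj2 (Hcc B HB)) (l' ++ l).
  have [H1 H2] := Cl_app Hx.
  exists x; split.
    move=> k; have := Hb x H2 k; have := Rle_abs M; have := Rabs_pos (x k).
    case: (Rcase_abs (x k)) => h; [rewrite (Rabs_left (x k) h)|rewrite (Rabs_right (x k) h)]; lra.
  move=> B0 HB0; split => //; exact: H1.
have [x Hx] := cube_compact (Rabs_pos M) Hcl Hfip.
by exists x => A HF; case: (Hx A) => _; apply.
Qed.

Lemma direction d (F : setfamily d) : infinite_family F -> kk_property d.+1 F ->
  (forall A, F A -> is_closed A /\ is_convex A) ->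
  ~ (exists x : point d, forall A, F A -> A x) ->
  forall l, exists u, sqnorm u = 1 /\ forall A, In A l -> F A ->
    forall a, A a -> forall t, 0 <= t -> A (fun i => a i + t * u i).
Proof.
move=> Hinf Hkk Hcc Hne l.
have Hclo : forall A, F A -> is_closed A by move=> A /Hcc [].
have Hcvx : forall A, F A -> is_convex A by move=> A /Hcc [].
have [p Hp] := helly_list Hinf Hkk Hcvx l.
have Hcl : forall n : nat, seq_closed (fun u => sqnorm u = 1 /\ Cl F l (fun i => p i + INR n * u i)).
  move=> n a u Ha Hc; split; first by apply: (sphere_closed (a:=a)) => // k; case: (Ha k).
  apply: (Cl_closed (l:=l) Hclo (a := fun k i => p i + INR n * a k i)) => [k|i]; first by case: (Ha k).
  exact: CV_plus (cv_const _) (cv_scal _ (Hc i)).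
have Hfip : forall l' : list nat, exists u, (forall k, - 1 <= u k <= 1) /\
    forall n, In n l' -> sqnorm u = 1 /\ Cl F l (fun i => p i + INR n * u i).
  move=> l'.
  pose N := List.fold_right Nat.max 0%nat l'.
  have HN : forall n, In n l' -> (n <= N)%coq_nat.
    rewrite /N; clear N; elim: l' => [|b r IH] n //= [<-|/IH]; lia.
  pose Sp := \big[Rplus/R0]_k Rabs (p k).
  have [x [Hx [k Hk]]] := unbounded Hinf Hkk Hcc Hne l (INR N + 1 + Sp).
  have Hpk : Rabs (p k) <= Sp := sum_ge_term k (fun i => Rabs_pos _).
  pose r := edist x p.
  have Hr : INR N + 1 < r.
    have := coord_le_dist x p k; have := Rabs_triang_inv (x k) (p k); rewrite -/r; lra.
  have HN0 := pos_INR N.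
  pose u := fun i => (x i - p i) / r.
  have Hur : forall i, u i * r = x i - p i by move=> i; rewrite /u; field; lra.
  exists u; split.
    move=> i; have := coord_le_dist x p i; rewrite -/r => h.
    have := Rle_abs (x i - p i); have := Rle_abs (- (x i - p i)); rewrite Rabs_Ropp.
    have := Hur i; split; nra.
  move=> n Hn; split.
    rewrite /sqnorm (sum_ext _ (G := fun i => / (r * r) * ((x i - p i) * (x i - p i)))); last first.
      by move=> i; rewrite /u; field; lra.
    rewrite sum_scal.
    have : r * r = sqnorm (fun i => x i - p i).
      by rewrite /r /Defs.dist sqrt_sqrt //; apply: sqnorm_ge0.
    rewrite /sqnorm => <-; field; lra.
  have HnN := le_INR _ _ (HN n Hn).
  have Ht : 0 <= INR n / r <= 1.
    have := pos_INR n; split.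
      apply: Rmult_le_pos => //; apply: Rlt_le; apply: Rinv_0_lt_compat; lra.
    apply: (Rmult_le_reg_r r); first lra.
    rewrite /Rdiv Rmult_assoc Rinv_l; lra.
  have := seg (Cl_convex (l := l) Hcvx) Hx Hp Ht.
  apply: ext_pt => i; rewrite /u; field; lra.
have [u Hu] := cube_compact Rle_0_1 Hcl Hfip.
exists u; split; first by case: (Hu 0%nat).
move=> A HA HF a Ha t Ht.
apply: (ray (p := p)) => //; first exact: closed_seq (Hclo A HF).
  exact: Hcvx.
by move=> n; case: (Hu n) => _ h; apply: h.
Qed.

Theorem lemma5p1 (d : nat) (F : setfamily d) :
  infinite_family F ->
  (forall A, F A -> is_closed A /\ is_convex A) ->
  kk_property d.+1 F ->
  ~ (exists x : point d, forall A, F A -> A x) ->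
  exists v : point d, sqnorm v = R1 /\
    forall A, F A -> forall a, A a -> forall t : R, Rle 0 t ->
      A (vadd a (vscale t v)).
Proof.
move=> Hinf Hcc Hkk Hne.
have Hclo : forall A, F A -> is_closed A by move=> A /Hcc [].
have Hcl : forall A, seq_closed (fun u => sqnorm u = 1 /\ (F A -> forall a, A a ->
    forall t, 0 <= t -> A (fun i => a i + t * u i))).
  move=> A b u Hb Hc; split; first by apply: (sphere_closed (a := b)) => // n; case: (Hb n).
  move=> HF a Ha t Ht; apply: (closed_seq (Hclo A HF) (a := fun n i => a i + t * b n i)).
    by move=> n; case: (Hb n) => _ h; apply: h.
  move=> i; exact: CV_plus (cv_const _) (cv_scal _ (Hc i)).
have Hfip : forall l' : list (point d -> Prop), exists u, (forall k, - 1 <= u k <= 1) /\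
    forall A, In A l' -> sqnorm u = 1 /\ (F A -> forall a, A a ->
      forall t, 0 <= t -> A (fun i => a i + t * u i)).
  move=> l'; have [u [Hu H]] := direction Hinf Hkk Hcc Hne l'.
  exists u; split.
    by move=> k; have := coord_le_sqnorm u k; rewrite Hu => h; split; nra.
  move=> A HA; split => // HF; exact: H A HA HF.
have [u Hu] := cube_compact Rle_0_1 Hcl Hfip.
exists u; split; first by case: (Hu (fun _ => True)).
move=> A HF a Ha t Ht; case: (Hu A) => _ h; exact: h HF a Ha t Ht.
Qed.
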